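(* Let $i\in\mathbb Z_{\ge0}$, $J\in\mathbb Z_{>0}$, $j\in\mathbb Z$. If $j<0$ or $j>J$ then $W_J(i,j;i+j-J,J\mid v,\lambda)=0$. If $0\le j\le J$ then $$W_J(i,j;i+j-J,J\mid v,\lambda)=f(2\eta)^{j-J}\frac{[2\eta J]_J}{[2\eta(J-j)]_{J-j}[2\eta j]_j}\frac{[2\eta i]_{J-j}[2\eta(i+j-J)-\eta\Lambda-v]_j[2\eta(\Lambda-i-j+J)]_{J-j}}{[\eta\Lambda-v]_J}$$ $$\times\frac{[\lambda+2\eta(i+j-J)-\eta\Lambda-v]_{J-j}\,[\lambda+2\eta(i+2j-J-\Lambda-1)]_j}{[\lambda+2\eta j]_{J-j}\,[\lambda+2\eta(2j-J-1)]_j}.$$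
   Context: Fix $\eta,\tau\in\mathbb C$, $\operatorname{Im}\tau>0$. $f(z)$ denotes either $\theta(z)=-\sum_{j\in\mathbb Z}\exp\big(\pi\mathbf i\tau(j+\tfrac12)^2+2\pi\mathbf i(j+\tfrac12)(z+\tfrac12)\big)$ or $\sin(\pi z)$. Elliptic Pochhammer: $[a]_k=\prod_{m=0}^{k-1}f(a-2\eta m)$ for $k\ge0$, $[a]_k=\prod_{m=1}^{-k}f(a+2\eta m)^{-1}$ for $k<0$. Unfused weights ($k\ge0$): $W_1(k,0;k,0\mid v,\lambda,\Lambda)=\frac{f(\eta(\Lambda-2k)-v)f(\lambda+2k\eta)}{f(\eta\Lambda-v)f(\lambda)}$, $W_1(k,1;k+1,0\mid\cdot)=\frac{f(v+\lambda+\eta(2k+2-\Lambda))f(2\eta)}{f(\eta\Lambda-v)f(\lambda)}$, $W_1(k,0;k-1,1\mid\cdot)=\frac{f(\lambda-v+\eta(2k-2-\Lambda))f(2\eta(\Lambda+1-k))f(2k\eta)}{f(\eta\Lambda-v)f(\lambda)f(2\eta)}$ ($k\ge1$), $W_1(k,1;k,1\mid\cdot)=\frac{f(\eta(2k-\Lambda)-v)f(\lambda+2\eta(k-\Lambda))}{f(\eta\Lambda-v)f(\lambda)}$, and $0$ otherwise. Column weights: for $\mathcal J_1=(j_{1,k})_{k=1}^J,\mathcal J_2=(j_{2,k})_{k=1}^J\in\{0,1\}^J$, $i^{(1)}=i_1$, $i^{(k+1)}=i^{(k)}+j_{1,k}-j_{2,k}$, $\Phi_J=\lambda$, $\Phi_k=\Phi_{k+1}\mp2\eta$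 according as $j_{1,k+1}=0$ or $1$; $W_J(i_1,\mathcal J_1;i_2,\mathcal J_2\mid v,\lambda)=\prod_{k=1}^JW_1(i^{(k)},j_{1,k};i^{(k+1)},j_{2,k}\mid v+2\eta(k-1),\Phi_k,\Lambda)$ if all $i^{(k)}\ge0$ and $i^{(J+1)}=i_2$, else $0$ (in particular weights with a negative vertical argument vanish). Fused weight: $W_J(i_1,j_1;i_2,j_2\mid v,\lambda)=\sum_{|\mathcal J_1|=j_1}W_J(i_1,\mathcal J_1;i_2,\mathcal K\mid v,\lambda)$ for any $\mathcal K$ with $|\mathcal K|=j_2$ (independent of $\mathcal K$); $\Lambda$ is suppressed. *)

(* Defs.v *)
From Stdlib Require Import Reals ZArith List ClassicalEpsilon.
Import ListNotations.
Open Scope R_scope.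

Record CC : Type := mkC { Re : R ; Im : R }.

Definition CC0 : CC := mkC 0 0.
Definition CC1 : CC := mkC 1 0.
Definition Ci : CC := mkC 0 1.
Definition Cadd (z w : CC) : CC := mkC (Re z + Re w) (Im z + Im w).
Definition Copp (z : CC) : CC := mkC (- Re z) (- Im z).
Definition Csub (z w : CC) : CC := Cadd z (Copp w).
Definition Cmul (z w : CC) : CC :=
  mkC (Re z * Re w - Im z * Im w) (Re z * Im w + Im z * Re w).
(* total inverse: Cinv 0 = 0 *)
Definition Cinv (z : CC) : CC :=
  let d := Re z * Re z + Im z * Im z in mkC (Re z / d) (- Im z / d).
Definition Cdiv (z w : CC) : CC := Cmul z (Cinv w).
Definition RtoC (x : R) : CC := mkC x 0.
Definition ZtoC (n : Z) : CC := RtoC (IZR n).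
Fixpoint Cpow (z : CC) (n : nat) : CC :=
  match n with O => CC1 | S n => Cmul z (Cpow z n) end.
Definition Cpowz (z : CC) (n : Z) : CC :=
  if (0 <=? n)%Z then Cpow z (Z.to_nat n) else Cinv (Cpow z (Z.to_nat (- n))).
Definition Cexp (z : CC) : CC :=
  mkC (exp (Re z) * cos (Im z)) (exp (Re z) * sin (Im z)).
Definition Cpi : CC := RtoC PI.

Declare Scope C_scope.
Delimit Scope C_scope with CC.
Bind Scope C_scope with CC.
Infix "+" := Cadd : C_scope.
Infix "-" := Csub : C_scope.
Infix "*" := Cmul : C_scope.
Infix "/" := Cdiv : C_scope.
Notation "- x" := (Copp x) : C_scope.

Open Scope C_scope.

Definition Csum (l : list CC) : CC := fold_right Cadd CC0 l.

Definition Ccv (u : nat -> CC) (l : CC) : Prop :=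
  Un_cv (fun n => Re (u n)) (Re l) /\ Un_cv (fun n => Im (u n)) (Im l).

Definition Csin (z : CC) : CC :=
  (Cexp (Ci * z) - Cexp (- (Ci * z))) / (ZtoC 2 * Ci).

Definition theta_term (tau z : CC) (j : Z) : CC :=
  let h := ZtoC j + RtoC (/ 2) in
  Cexp (Cpi * Ci * tau * (h * h) + ZtoC 2 * Cpi * Ci * h * (z + RtoC (/ 2))).

Definition theta_partial (tau z : CC) (N : nat) : CC :=
  Csum (map (fun k => theta_term tau z (Z.of_nat k - Z.of_nat N)%Z)
            (seq 0 (2 * N + 1))).

(** theta(z) = - sum_{j in Z} theta_term; the sum is the limit of the
    symmetric partial sums (it converges absolutely for Im tau > 0). *)
Definition theta (tau z : CC) : CC :=
  - epsilon (inhabits CC0) (fun l => Ccv (theta_partial tau z) l).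

Inductive fkind : Type := FTheta | FSin.

Definition fval (fk : fkind) (tau z : CC) : CC :=
  match fk with
  | FTheta => theta tau z
  | FSin => Csin (Cpi * z)
  end.

Fixpoint Cprod_nat (n : nat) (g : nat -> CC) : CC :=
  match n with O => CC1 | S n => Cprod_nat n g * g n end.

Definition poch (f : CC -> CC) (eta a : CC) (k : Z) : CC :=
  if (0 <=? k)%Z then
    Cprod_nat (Z.to_nat k) (fun m => f (a - ZtoC 2 * eta * ZtoC (Z.of_nat m)))
  else
    Cprod_nat (Z.to_nat (- k))
      (fun m => Cinv (f (a + ZtoC 2 * eta * ZtoC (Z.of_nat m + 1)))).

Definition b2Z (b : bool) : Z := if b then 1%Z else 0%Z.

Definition W1 (f : CC -> CC) (eta : CC) (k : Z) (j1 : bool) (k2 : Z) (j2 : bool)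
  (v lam Lam : CC) : CC :=
  let kC := ZtoC k in
  let two := ZtoC 2 in
  let den := f (eta * Lam - v) * f lam in
  if (k <? 0)%Z then CC0 else
  match j1, j2 with
  | false, false =>
      if (k2 =? k)%Z then
        f (eta * (Lam - two * kC) - v) * f (lam + two * kC * eta) / den
      else CC0
  | true, false =>
      if (k2 =? k + 1)%Z then
        f (v + lam + eta * (two * kC + two - Lam)) * f (two * eta) / den
      else CC0
  | false, true =>
      if ((k2 =? k - 1)%Z && (1 <=? k)%Z)%bool then
        f (lam - v + eta * (two * kC - two - Lam))
          * f (two * eta * (Lam + CC1 - kC)) * f (two * kC * eta)
          / (den * f (two * eta))
      else CC0
  | true, true =>
      if (k2 =? k)%Z then
        f (eta * (two * kC - Lam) - v) * f (lam + two * eta * (kC - Lam)) / den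
      else CC0
  end.

(** Phi for the entry whose upper part (entries k+1..J of J_1) is [tail]:
    Phi_J = lam, Phi_k = Phi_{k+1} - 2 eta (if j_{1,k+1}=0) or + 2 eta (if 1). *)
Fixpoint Phi (eta lam : CC) (tail : list bool) : CC :=
  match tail with
  | [] => lam
  | b :: t => Phi eta lam t + (if b then ZtoC 2 * eta else - (ZtoC 2 * eta))
  end.

(** Lists are read bottom-up: the head is the entry k = 1.
    [i] is the current vertical value i^(k), [v] is v + 2 eta (k-1);
    the weight vanishes if some i^(k) (k = 1..J+1) is negative or if
    i^(J+1) <> i2, or if the lists have different lengths. *)
Fixpoint Wcol_aux (f : CC -> CC) (eta Lam lam : CC) (i2 : Z)
  (i : Z) (v : CC) (l1 l2 : list bool) : CC :=
  if (i <? 0)%Z then CC0 else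
  match l1, l2 with
  | [], [] => if (i =? i2)%Z then CC1 else CC0
  | b1 :: t1, b2 :: t2 =>
      let inext := (i + b2Z b1 - b2Z b2)%Z in
      W1 f eta i b1 inext b2 v (Phi eta lam t1) Lam
        * Wcol_aux f eta Lam lam i2 inext (v + ZtoC 2 * eta) t1 t2
  | _, _ => CC0
  end.

Definition Wcol (f : CC -> CC) (eta Lam : CC) (i1 : Z) (l1 : list bool) (i2 : Z)
  (l2 : list bool) (v lam : CC) : CC :=
  Wcol_aux f eta Lam lam i2 i1 v l1 l2.

Fixpoint bits (n : nat) : list (list bool) :=
  match n with
  | O => [[]]
  | S n => map (cons false) (bits n) ++ map (cons true) (bits n)
  end.

Definition ones (l : list bool) : Z := Z.of_nat (length (filter (fun b => b) l)).

(** Fused weight W_J(i1, j1; i2, j2 | v, lam): sum over J_1 with |J_1| = j1,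
    with the fixed representative K = (1,...,1,0,...,0) (j2 ones) for J_2. *)
Definition Wfused (f : CC -> CC) (eta Lam : CC) (J : nat) (i1 j1 i2 j2 : Z)
  (v lam : CC) : CC :=
  let K := repeat true (Z.to_nat j2) ++ repeat false (J - Z.to_nat j2) in
  Csum (map (fun l => Wcol f eta Lam i1 l i2 K v lam)
            (filter (fun l => (ones l =? j1)%Z) (bits J))).

(* Main.v *)
Require Import Defs.
From Stdlib Require Import Reals ZArith List Lra Lia Field Ring Permutation ClassicalEpsilon.
Import ListNotations.
Open Scope C_scope.

Lemma CC_eq (z w : CC) : Re z = Re w -> Im z = Im w -> z = w.
Proof. destruct z, w; simpl; intros; subst; reflexivity. Qed.

Lemma CC_ring : ring_theory CC0 CC1 Cadd Cmul Csub Copp (@eq CC).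
Proof. constructor; intros; apply CC_eq; simpl; ring. Qed.

Lemma CC1_neq_0 : CC1 <> CC0.
Proof. intro H. injection H. lra. Qed.

Lemma CC_field : field_theory CC0 CC1 Cadd Cmul Csub Copp Cdiv Cinv (@eq CC).
Proof.
  constructor.
  - exact CC_ring.
  - exact CC1_neq_0.
  - reflexivity.
  - intros [a b] H.
    assert (a * a + b * b <> 0)%R.
    { intro E. apply H. assert (a = 0 /\ b = 0)%R as [-> ->] by nra. reflexivity. }
    apply CC_eq; simpl; field; auto.
Qed.

Add Field CCfield : CC_field.

Lemma ZtoC_add a b : ZtoC (a + b) = ZtoC a + ZtoC b.
Proof. unfold ZtoC, RtoC; apply CC_eq; simpl; rewrite ?plus_IZR; ring. Qed.
Lemma ZtoC_mul a b : ZtoC (a * b) = ZtoC a * ZtoC b.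
Proof. unfold ZtoC, RtoC; apply CC_eq; simpl; rewrite ?mult_IZR; ring. Qed.
Lemma ZtoC_opp a : ZtoC (- a) = - ZtoC a.
Proof. unfold ZtoC, RtoC; apply CC_eq; simpl; rewrite ?opp_IZR; ring. Qed.
Lemma ZtoC_sub a b : ZtoC (a - b) = ZtoC a - ZtoC b.
Proof. unfold ZtoC, RtoC; apply CC_eq; simpl; rewrite ?minus_IZR; ring. Qed.
Lemma ZtoC_0 : ZtoC 0 = CC0.
Proof. reflexivity. Qed.
Lemma ZtoC_1 : ZtoC 1 = CC1.
Proof. reflexivity. Qed.
Lemma ZtoC_2 : ZtoC 2 = CC1 + CC1.
Proof. unfold ZtoC, RtoC; apply CC_eq; simpl; ring. Qed.

Lemma Cexp_add u w : Cexp (u + w) = Cexp u * Cexp w.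
Proof.
  unfold Cexp; apply CC_eq; simpl; rewrite ?exp_plus, ?cos_plus, ?sin_plus; ring.
Qed.

Lemma Cmul_neq0 a b : a <> CC0 -> b <> CC0 -> a * b <> CC0.
Proof. intros Ha Hb E. apply Hb. transitivity (Cinv a * (a * b)). field; auto. rewrite E; ring. Qed.
Lemma Copp_neq0 a : a <> CC0 -> - a <> CC0.
Proof. intros Ha E. apply Ha. transitivity (- - a). ring. rewrite E; ring. Qed.
Lemma Cinv_neq0 a : a <> CC0 -> Cinv a <> CC0.
Proof. intros Ha E. apply CC1_neq_0. transitivity (a * Cinv a). field; auto. rewrite E; ring. Qed.

Definition sinA (a : CC) : CC :=
  - (Cexp (ZtoC 2 * Ci * (Cpi * a)) + Cexp (- (ZtoC 2 * Ci * (Cpi * a)))) / ZtoC 4.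

Lemma Ci2 : Ci * Ci = - CC1.
Proof. apply CC_eq; simpl; ring. Qed.

Lemma Cexp_opp_mul u : Cexp u * Cexp (- u) = CC1.
Proof. rewrite <- Cexp_add. replace (u + - u) with CC0 by ring.
  unfold Cexp; apply CC_eq; simpl; rewrite ?exp_0, ?cos_0, ?sin_0; ring. Qed.

Lemma ZtoC_neq0 z : z <> 0%Z -> ZtoC z <> CC0.
Proof. intros H E. injection E. intros. apply H. apply eq_IZR. auto. Qed.

Lemma sin_R a b :
  Csin (Cpi * (a + b)) * Csin (Cpi * (a - b)) = sinA a * CC1 - CC1 * sinA b.
Proof.
  unfold Csin, sinA.
  set (E := fun z => Cexp (Ci * (Cpi * z))).
  assert (HE : forall z w, E z * E w = E (z + w)).
  { intros; unfold E; rewrite <- Cexp_add; f_equal; ring. }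
  assert (HEm : forall z, Cexp (- (Ci * (Cpi * z))) = E (- z)).
  { intros; unfold E; f_equal; ring. }
  assert (H2 : forall z, Cexp (ZtoC 2 * Ci * (Cpi * z)) = E (ZtoC 2 * z)).
  { intros; unfold E; f_equal; ring. }
  assert (H2m : forall z, Cexp (- (ZtoC 2 * Ci * (Cpi * z))) = E (- (ZtoC 2 * z))).
  { intros; unfold E; f_equal; ring. }
  rewrite !HEm, !H2, !H2m. fold (E (a + b)). fold (E (a - b)).
  assert (Ci <> CC0) by (intro H; injection H; lra).
  assert (ZtoC 2 <> CC0) by (apply ZtoC_neq0; lia).
  assert (ZtoC 4 = ZtoC 2 * ZtoC 2) by (rewrite <- ZtoC_mul; reflexivity).
  assert (Hs : forall z w, E (z + w) = E z * E w) by (intros; rewrite HE; auto).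
  assert (Hinv : forall z, E (- z) = Cinv (E z) /\ E z <> CC0).
  { intros z. assert (E z * E (- z) = CC1).
    { unfold E. rewrite <- Cexp_opp_mul with (u := Ci * (Cpi * z)). f_equal. f_equal. ring. }
    assert (E z <> CC0). { intro Hz. rewrite Hz in H3. apply CC1_neq_0. rewrite <- H3. ring. }
    split; auto. transitivity (Cinv (E z) * (E z * E (- z))); [field; auto| rewrite H3; field; auto]. }
  replace (a + b) with (a + b) by ring.
  replace (- (a + b)) with (- a + - b) by ring.
  replace (a - b) with (a + - b) by ring.
  replace (- (a + - b)) with (- a + b) by ring.
  replace (ZtoC 2 * a) with (a + a) by (apply CC_eq; simpl; ring).
  replace (ZtoC 2 * b) with (b + b) by (apply CC_eq; simpl; ring).
  replace (- (a + a)) with (- a + - a) by ring.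
  replace (- (b + b)) with (- b + - b) by ring.
  rewrite !Hs.
  destruct (Hinv a) as [-> Ha]. destruct (Hinv b) as [-> Hb].
  rewrite H1.
  match goal with |- ?X / ?k * (?Y / ?k) = _ =>
    transitivity (X * Y / (k * k)); [field; split; auto|] end.
  replace (ZtoC 2 * Ci * (ZtoC 2 * Ci)) with (- (ZtoC 2 * ZtoC 2))
    by (symmetry; transitivity (ZtoC 2 * ZtoC 2 * (Ci * Ci)); [ring| rewrite Ci2; ring]).
  field. repeat split; auto. apply Copp_neq0, Cmul_neq0; auto.
Qed.

Definition N1 (z : CC) : R := (Rabs (Re z) + Rabs (Im z))%R.

Lemma N1_ge0 z : (0 <= N1 z)%R.
Proof. unfold N1. pose proof (Rabs_pos (Re z)). pose proof (Rabs_pos (Im z)). lra. Qed.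
Lemma N1_add z w : (N1 (z + w) <= N1 z + N1 w)%R.
Proof. unfold N1; simpl. pose proof (Rabs_triang (Re z) (Re w)). pose proof (Rabs_triang (Im z) (Im w)). lra. Qed.
Lemma N1_opp z : N1 (- z) = N1 z.
Proof. unfold N1; simpl. rewrite !Rabs_Ropp. auto. Qed.
Lemma N1_sub z w : (N1 (z - w) <= N1 z + N1 w)%R.
Proof. unfold Csub. rewrite <- (N1_opp w). apply N1_add. Qed.
Lemma N1_mul z w : (N1 (z * w) <= N1 z * N1 w)%R.
Proof.
  unfold N1; simpl.
  pose proof (Rabs_triang (Re z * Re w) (- (Im z * Im w))).
  pose proof (Rabs_triang (Re z * Im w) (Im z * Re w)).
  rewrite Rabs_Ropp, !Rabs_mult in H. rewrite !Rabs_mult in H0.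
  unfold Rminus.
  pose proof (Rabs_pos (Re z)). pose proof (Rabs_pos (Im z)).
  pose proof (Rabs_pos (Re w)). pose proof (Rabs_pos (Im w)). nra.
Qed.
Lemma Re_le_N1 z : (Rabs (Re z) <= N1 z)%R.
Proof. unfold N1. pose proof (Rabs_pos (Im z)). lra. Qed.
Lemma Im_le_N1 z : (Rabs (Im z) <= N1 z)%R.
Proof. unfold N1. pose proof (Rabs_pos (Re z)). lra. Qed.
Lemma N1_0 : N1 CC0 = 0%R.
Proof. unfold N1; simpl. rewrite Rabs_R0. ring. Qed.

Definition lsum {A} (g : A -> CC) (l : list A) : CC := Csum (map g l).
Definition rsum {A} (g : A -> R) (l : list A) : R := fold_right Rplus 0%R (map g l).

Lemma lsum_nil {A} (g : A -> CC) : lsum g [] = CC0.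
Proof. reflexivity. Qed.
Lemma lsum_cons {A} (g : A -> CC) a l : lsum g (a :: l) = g a + lsum g l.
Proof. reflexivity. Qed.
Lemma rsum_cons {A} (g : A -> R) a l : rsum g (a :: l) = (g a + rsum g l)%R.
Proof. reflexivity. Qed.
Lemma lsum_app {A} (g : A -> CC) l1 l2 : lsum g (l1 ++ l2) = lsum g l1 + lsum g l2.
Proof. induction l1; simpl. unfold lsum; simpl; ring. unfold lsum in *; simpl; rewrite IHl1; ring. Qed.
Lemma rsum_app {A} (g : A -> R) l1 l2 : rsum g (l1 ++ l2) = (rsum g l1 + rsum g l2)%R.
Proof. induction l1; simpl. unfold rsum; simpl; ring. unfold rsum in *; simpl; rewrite IHl1; ring. Qed.
Lemma lsum_perm {A} (g : A -> CC) l1 l2 : Permutation l1 l2 -> lsum g l1 = lsum g l2.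
Proof. induction 1; unfold lsum in *; simpl; try congruence; try ring. Qed.
Lemma rsum_perm {A} (g : A -> R) l1 l2 : Permutation l1 l2 -> rsum g l1 = rsum g l2.
Proof. induction 1; unfold rsum in *; simpl; try congruence; try ring. Qed.
Lemma lsum_ext_in {A} (g h : A -> CC) l : (forall x, In x l -> g x = h x) -> lsum g l = lsum h l.
Proof. intros H; unfold lsum; f_equal; apply map_ext_in; auto. Qed.
Lemma rsum_ext_in {A} (g h : A -> R) l : (forall x, In x l -> g x = h x) -> rsum g l = rsum h l.
Proof. intros H; unfold rsum; f_equal; apply map_ext_in; auto. Qed.
Lemma rsum_le {A} (g h : A -> R) l : (forall x, In x l -> g x <= h x)%R -> (rsum g l <= rsum h l)%R.
Proof. induction l; simpl; intros H. unfold rsum; simpl; lra. unfold rsum in *; simpl.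
  pose proof (H a (or_introl eq_refl)). pose proof (IHl (fun x Hx => H x (or_intror Hx))). lra. Qed.
Lemma rsum_ge0 {A} (g : A -> R) l : (forall x, In x l -> 0 <= g x)%R -> (0 <= rsum g l)%R.
Proof. intros. replace 0%R with (rsum (fun _ => 0%R) l). apply rsum_le; auto.
  induction l; unfold rsum in *; simpl; auto. rewrite IHl; auto. ring. intros; apply H; simpl; auto. Qed.
Lemma N1_lsum {A} (g : A -> CC) l : (N1 (lsum g l) <= rsum (fun x => N1 (g x)) l)%R.
Proof. induction l; unfold lsum, rsum in *; simpl. rewrite N1_0; lra.
  pose proof (N1_add (g a) (Csum (map g l))). lra. Qed.
Lemma lsum_map {A B} (g : B -> CC) (h : A -> B) l : lsum g (map h l) = lsum (fun x => g (h x)) l.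
Proof. unfold lsum; rewrite map_map; auto. Qed.
Lemma rsum_map {A B} (g : B -> R) (h : A -> B) l : rsum g (map h l) = rsum (fun x => g (h x)) l.
Proof. unfold rsum; rewrite map_map; auto. Qed.
Lemma lsum_add {A} (g h : A -> CC) l : lsum (fun x => g x + h x) l = lsum g l + lsum h l.
Proof. induction l; unfold lsum in *; simpl. ring. rewrite IHl; ring. Qed.
Lemma rsum_add {A} (g h : A -> R) l : rsum (fun x => g x + h x)%R l = (rsum g l + rsum h l)%R.
Proof. induction l; unfold rsum in *; simpl. ring. rewrite IHl; ring. Qed.
Lemma lsum_scal {A} (c : CC) (g : A -> CC) l : lsum (fun x => c * g x) l = c * lsum g l.
Proof. induction l; unfold lsum in *; simpl. ring. rewrite IHl; ring. Qed.
Lemma rsum_scal {A} (c : R) (g : A -> R) l : rsum (fun x => c * g x)%R l = (c * rsum g l)%R.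
Proof. induction l; unfold rsum in *; simpl. ring. rewrite IHl; ring. Qed.
Lemma lsum_opp {A} (g : A -> CC) l : lsum (fun x => - g x) l = - lsum g l.
Proof. induction l; unfold lsum in *; simpl. ring. rewrite IHl; ring. Qed.
Lemma lsum_sub {A} (g h : A -> CC) l : lsum (fun x => g x - h x) l = lsum g l - lsum h l.
Proof. induction l; unfold lsum in *; simpl. ring. rewrite IHl; ring. Qed.
Lemma lsum_zero {A} (g : A -> CC) l : (forall x, In x l -> g x = CC0) -> lsum g l = CC0.
Proof. induction l; intros H. reflexivity. rewrite lsum_cons, H, IHl. apply CC_eq; simpl; ring.
  intros; apply H; simpl; auto. simpl; auto. Qed.

Lemma lsum_prod {A B} (u : A -> CC) (w : B -> CC) l1 l2 :
  lsum (fun p => u (fst p) * w (snd p)) (list_prod l1 l2) = lsum u l1 * lsum w l2.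
Proof.
  induction l1; simpl. unfold lsum; simpl; ring.
  rewrite lsum_app, IHl1, lsum_map. simpl. rewrite lsum_scal. rewrite lsum_cons. ring.
Qed.
Lemma rsum_prod {A B} (u : A -> R) (w : B -> R) l1 l2 :
  rsum (fun p => u (fst p) * w (snd p))%R (list_prod l1 l2) = (rsum u l1 * rsum w l2)%R.
Proof.
  induction l1; simpl. unfold rsum; simpl; ring.
  rewrite rsum_app, IHl1, rsum_map. simpl. rewrite rsum_scal. rewrite rsum_cons. ring.
Qed.

Lemma lsum_filter {A} (P : A -> bool) (g : A -> CC) l :
  lsum (fun x => if P x then g x else CC0) l = lsum g (filter P l).
Proof. induction l; simpl; auto. rewrite lsum_cons, IHl. destruct (P a). auto. apply CC_eq; simpl; ring. Qed.
Lemma rsum_filter {A} (P : A -> bool) (g : A -> R) l :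
  rsum (fun x => if P x then g x else 0%R) l = rsum g (filter P l).
Proof. induction l; simpl; auto. rewrite rsum_cons, IHl. destruct (P a). auto. ring. Qed.

Lemma lsum_same {A} (g : A -> CC) l1 l2 :
  NoDup l1 -> NoDup l2 -> (forall x, In x l1 <-> In x l2) -> lsum g l1 = lsum g l2.
Proof. intros; apply lsum_perm, NoDup_Permutation; auto. Qed.
Lemma rsum_same {A} (g : A -> R) l1 l2 :
  NoDup l1 -> NoDup l2 -> (forall x, In x l1 <-> In x l2) -> rsum g l1 = rsum g l2.
Proof. intros; apply rsum_perm, NoDup_Permutation; auto. Qed.

Section Ind.
Context {A : Type} (dec : forall x y : A, {x = y} + {x <> y}).
Definition inb (l : list A) (x : A) : bool := if in_dec dec x l then true else false.

Lemma lsum_ind_big (g : A -> CC) X B :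
  NoDup X -> NoDup B -> (forall p, In p X -> In p B) ->
  lsum g X = lsum (fun p => if inb X p then g p else CC0) B.
Proof.
  intros. rewrite lsum_filter. apply lsum_same; auto. apply NoDup_filter; auto.
  intros x. rewrite filter_In. unfold inb. destruct (in_dec dec x X); intuition; discriminate.
Qed.
Lemma rsum_ind_big (g : A -> R) X B :
  NoDup X -> NoDup B -> (forall p, In p X -> In p B) ->
  rsum g X = rsum (fun p => if inb X p then g p else 0%R) B.
Proof.
  intros. rewrite rsum_filter. apply rsum_same; auto. apply NoDup_filter; auto.
  intros x. rewrite filter_In. unfold inb. destruct (in_dec dec x X); intuition; discriminate.
Qed.

Lemma compare_sums (g : A -> CC) (mu : A -> R) S X Y B :
  NoDup S -> NoDup X -> NoDup Y -> NoDup B ->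
  (forall p, In p S -> In p X) -> (forall p, In p S -> In p Y) ->
  (forall p, In p X -> In p B) -> (forall p, In p Y -> In p B) ->
  (forall p, N1 (g p) <= mu p)%R ->
  (N1 (lsum g X - lsum g Y) <= rsum mu B - rsum mu S)%R.
Proof.
  intros HS HX HY HB SX SY XB YB Hmu.
  assert (SB : forall p, In p S -> In p B) by auto.
  rewrite (lsum_ind_big g X B), (lsum_ind_big g Y B), (rsum_ind_big mu S B); auto.
  rewrite <- lsum_sub.
  eapply Rle_trans; [apply N1_lsum|].
  assert (E : (rsum mu B - rsum (fun p => if inb S p then mu p else 0) B =
               rsum (fun p => if inb S p then 0 else mu p) B)%R).
  { assert (forall p, mu p = (if inb S p then mu p else 0) + (if inb S p then 0 else mu p))%R.
    { intros; destruct (inb S p); ring. }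
    rewrite (rsum_ext_in mu _ B (fun p _ => H p)), rsum_add. ring. }
  rewrite E. apply rsum_le. intros p Hp.
  unfold inb at 3. destruct (in_dec dec p S) as [i|n].
  - unfold inb. destruct (in_dec dec p X); [|exfalso; auto].
    destruct (in_dec dec p Y); [|exfalso; auto].
    replace (g p - g p) with CC0 by ring. rewrite N1_0; lra.
  - unfold inb. destruct (in_dec dec p X), (in_dec dec p Y).
    + replace (g p - g p) with CC0 by ring. rewrite N1_0. pose proof (N1_ge0 (g p)). specialize (Hmu p). lra.
    + replace (g p - CC0) with (g p) by ring. auto.
    + replace (CC0 - g p) with (- g p) by ring. rewrite N1_opp; auto.
    + replace (CC0 - CC0) with CC0 by ring. rewrite N1_0. pose proof (N1_ge0 (g p)). specialize (Hmu p). lra.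
Qed.
End Ind.

Definition zrange (N : nat) : list Z := map (fun k => (Z.of_nat k - Z.of_nat N)%Z) (seq 0 (2 * N + 1)).

Lemma In_zrange N k : In k (zrange N) <-> (- Z.of_nat N <= k <= Z.of_nat N)%Z.
Proof.
  unfold zrange. rewrite in_map_iff. split.
  - intros [x [<- Hx]]. apply in_seq in Hx. lia.
  - intros H. exists (Z.to_nat (k + Z.of_nat N)). split. lia. apply in_seq. lia.
Qed.
Lemma NoDup_zrange N : NoDup (zrange N).
Proof. unfold zrange. apply FinFun.Injective_map_NoDup. intros a b H; lia. apply seq_NoDup. Qed.

Lemma NoDup_prod {A B} (l1 : list A) (l2 : list B) : NoDup l1 -> NoDup l2 -> NoDup (list_prod l1 l2).
Proof.
  induction 1; intros H2; simpl. constructor.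
  apply NoDup_app. apply FinFun.Injective_map_NoDup; auto. intros a b E; injection E; auto.
  auto. intros p Hp1 Hp2. apply in_map_iff in Hp1. destruct Hp1 as [y [<- _]].
  apply in_prod_iff in Hp2. tauto.
Qed.

Definition Sq (N : nat) := list_prod (zrange N) (zrange N).
Lemma In_Sq N p : In p (Sq N) <-> (- Z.of_nat N <= fst p <= Z.of_nat N /\ - Z.of_nat N <= snd p <= Z.of_nat N)%Z.
Proof. destruct p; unfold Sq; rewrite in_prod_iff, !In_zrange; simpl; tauto. Qed.
Lemma NoDup_Sq N : NoDup (Sq N).
Proof. apply NoDup_prod; apply NoDup_zrange. Qed.

Lemma zrange_S N : Permutation (zrange (S N)) (Z.of_nat (S N) :: (- Z.of_nat (S N))%Z :: zrange N).
Proof.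
  apply NoDup_Permutation. apply NoDup_zrange.
  constructor. intros [H|H]. lia. apply In_zrange in H. lia.
  constructor. intros H. apply In_zrange in H. lia. apply NoDup_zrange.
  intros x. rewrite In_zrange. simpl. rewrite In_zrange. lia.
Qed.

Lemma Zeq_dec' : forall x y : Z, {x = y} + {x <> y}.
Proof. exact Z.eq_dec. Qed.
Lemma ZZeq_dec : forall x y : Z * Z, {x = y} + {x <> y}.
Proof. decide equality; apply Z.eq_dec. Qed.

Lemma Ccv_unique u l1 l2 : Ccv u l1 -> Ccv u l2 -> l1 = l2.
Proof. intros [H1 H2] [H3 H4]. apply CC_eq; eapply UL_sequence; eauto. Qed.

Lemma Ccv_add u w l1 l2 : Ccv u l1 -> Ccv w l2 -> Ccv (fun n => u n + w n) (l1 + l2).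
Proof. intros [H1 H2] [H3 H4]; split; simpl; apply CV_plus; auto. Qed.
Lemma Ccv_opp u l1 : Ccv u l1 -> Ccv (fun n => - u n) (- l1).
Proof. intros [H1 H2]; split; simpl; apply (CV_opp _ _ H1) || apply (CV_opp _ _ H2). Qed.
Lemma Ccv_sub u w l1 l2 : Ccv u l1 -> Ccv w l2 -> Ccv (fun n => u n - w n) (l1 - l2).
Proof. intros. apply Ccv_add; auto. apply Ccv_opp; auto. Qed.
Lemma Ccv_mul u w l1 l2 : Ccv u l1 -> Ccv w l2 -> Ccv (fun n => u n * w n) (l1 * l2).
Proof. intros [H1 H2] [H3 H4]; split; simpl.
  apply CV_minus; apply CV_mult; auto.
  apply CV_plus; apply CV_mult; auto. Qed.
Lemma Ccv_ext u w l : (forall n, u n = w n) -> Ccv u l -> Ccv w l.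
Proof. intros E [H1 H2]; split; intros eps He; [destruct (H1 eps He) as [N HN]|destruct (H2 eps He) as [N HN]];
  exists N; intros n Hn; rewrite <- E; auto. Qed.

Lemma Ccv_close u w e L :
  (forall n, N1 (u n - w n) <= e n)%R -> Un_cv e 0 -> Ccv w L -> Ccv u L.
Proof.
  intros Hb He [H1 H2]; split; intros eps Heps.
  - destruct (He (eps/2)%R) as [N1' HN1]. lra. destruct (H1 (eps/2)%R) as [N2 HN2]. lra.
    exists (max N1' N2). intros n Hn. specialize (HN1 n ltac:(lia)). specialize (HN2 n ltac:(lia)).
    unfold R_dist in *. pose proof (Re_le_N1 (u n - w n)). specialize (Hb n). simpl in H.
    rewrite Rminus_0_r in HN1.
    replace (Re (u n) - Re L)%R with ((Re (u n) + - Re (w n)) + (Re (w n) - Re L))%R by ring.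
    pose proof (Rabs_triang (Re (u n) + - Re (w n)) (Re (w n) - Re L)).
    pose proof (Rle_abs (e n)). lra.
  - destruct (He (eps/2)%R) as [N1' HN1]. lra. destruct (H2 (eps/2)%R) as [N2 HN2]. lra.
    exists (max N1' N2). intros n Hn. specialize (HN1 n ltac:(lia)). specialize (HN2 n ltac:(lia)).
    unfold R_dist in *. pose proof (Im_le_N1 (u n - w n)). specialize (Hb n). simpl in H.
    rewrite Rminus_0_r in HN1.
    replace (Im (u n) - Im L)%R with ((Im (u n) + - Im (w n)) + (Im (w n) - Im L))%R by ring.
    pose proof (Rabs_triang (Im (u n) + - Im (w n)) (Im (w n) - Im L)).
    pose proof (Rle_abs (e n)). lra.
Qed.

Lemma zrange_incl m n : (m <= n)%nat -> forall k, In k (zrange m) -> In k (zrange n).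
Proof. intros H k. rewrite !In_zrange. lia. Qed.

Lemma rsum_zrange_S (mu : Z -> R) N :
  rsum mu (zrange (S N)) = (mu (Z.of_nat (S N)) + mu (- Z.of_nat (S N))%Z + rsum mu (zrange N))%R.
Proof. rewrite (rsum_perm _ _ _ (zrange_S N)). rewrite !rsum_cons. ring. Qed.

Lemma rsum_zrange_cv (mu : Z -> R) M :
  (forall k, 0 <= mu k)%R -> (forall N, rsum mu (zrange N) <= M)%R ->
  { L | Un_cv (fun N => rsum mu (zrange N)) L }.
Proof.
  intros H0 HM. apply growing_cv.
  - intros n. rewrite rsum_zrange_S. pose proof (H0 (Z.of_nat (S n))). pose proof (H0 (- Z.of_nat (S n))%Z). lra.
  - exists M. intros x [n ->]. auto.
Qed.

Lemma lsum_zrange_cauchy (g : Z -> CC) (mu : Z -> R) m n :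
  (m <= n)%nat -> (forall k, N1 (g k) <= mu k)%R ->
  (N1 (lsum g (zrange n) - lsum g (zrange m)) <= rsum mu (zrange n) - rsum mu (zrange m))%R.
Proof.
  intros Hmn Hg. apply (compare_sums Z.eq_dec); auto using NoDup_zrange.
  apply zrange_incl; auto.
  apply zrange_incl; auto.
Qed.

Lemma abs_summable (g : Z -> CC) (mu : Z -> R) M :
  (forall k, N1 (g k) <= mu k)%R -> (forall N, rsum mu (zrange N) <= M)%R ->
  exists L, Ccv (fun N => lsum g (zrange N)) L.
Proof.
  intros Hg HM.
  assert (H0 : forall k, (0 <= mu k)%R) by (intros k; pose proof (N1_ge0 (g k)); specialize (Hg k); lra).
  destruct (rsum_zrange_cv mu M H0 HM) as [P HP].
  pose proof (CV_Cauchy _ (exist _ P HP)) as HC.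
  assert (Key : forall eps, (eps > 0)%R -> exists N, forall n m, (n >= N)%nat -> (m >= N)%nat ->
             (N1 (lsum g (zrange n) - lsum g (zrange m)) < eps)%R).
  { intros eps He. destruct (HC eps He) as [N HN]. exists N. intros n m Hn Hm.
    specialize (HN n m Hn Hm). unfold R_dist in HN. cbv beta in HN.
    destruct (le_lt_dec m n).
    - pose proof (lsum_zrange_cauchy g mu m n l Hg). pose proof (Rle_abs (rsum mu (zrange n) - rsum mu (zrange m))). lra.
    - pose proof (lsum_zrange_cauchy g mu n m ltac:(lia) Hg).
      replace (lsum g (zrange n) - lsum g (zrange m)) with (- (lsum g (zrange m) - lsum g (zrange n))) by ring.
      rewrite N1_opp. rewrite Rabs_minus_sym in HN.
      pose proof (Rle_abs (rsum mu (zrange m) - rsum mu (zrange n))). lra. }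
  destruct (R_complete (fun N => Re (lsum g (zrange N)))) as [lr Hr].
  { intros eps He. destruct (Key eps He) as [N HN]. exists N. intros n m Hn Hm. unfold R_dist.
    pose proof (Re_le_N1 (lsum g (zrange n) - lsum g (zrange m))). specialize (HN n m Hn Hm). simpl in H. unfold Rminus. lra. }
  destruct (R_complete (fun N => Im (lsum g (zrange N)))) as [li Hi].
  { intros eps He. destruct (Key eps He) as [N HN]. exists N. intros n m Hn Hm. unfold R_dist.
    pose proof (Im_le_N1 (lsum g (zrange n) - lsum g (zrange m))). specialize (HN n m Hn Hm). simpl in H. unfold Rminus. lra. }
  exists (mkC lr li). split; auto.
Qed.

Lemma N1_Cexp w : (N1 (Cexp w) <= 2 * exp (Re w))%R.
Proof.
  unfold N1, Cexp; simpl. rewrite !Rabs_mult. rewrite (Rabs_right (exp _)) by (left; apply exp_pos).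
  pose proof (COS_bound (Im w)). pose proof (SIN_bound (Im w)).
  assert (Rabs (cos (Im w)) <= 1)%R by (apply Rabs_le; lra).
  assert (Rabs (sin (Im w)) <= 1)%R by (apply Rabs_le; lra).
  pose proof (exp_pos (Re w)). nra.
Qed.

Lemma quad_bound a b c : (0 < a)%R -> forall t : R,
  (- a * t * t + b * t + c <= (c + (Rabs b + 1) * (Rabs b + 1) / (4 * a)) - Rabs t)%R.
Proof.
  intros Ha t.
  assert (Hbt : (b * t <= Rabs b * Rabs t)%R) by (rewrite <- Rabs_mult; apply Rle_abs).
  assert (Ht2 : (t * t = Rabs t * Rabs t)%R) by (unfold Rabs; destruct (Rcase_abs t); ring).
  set (s := Rabs t) in *. set (B := (Rabs b + 1)%R).
  assert ((c + B * B / (4 * a)) - s - (- a * t * t + b * t + c) >= (c + B*B/(4*a)) - s - (- a * s * s + (B - 1) * s + c))%R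
    by (assert (a * t * t = a * s * s)%R by (rewrite !Rmult_assoc, Ht2; ring); unfold B; nra).
  assert ((c + B*B/(4*a)) - s - (- a * s * s + (B - 1) * s + c) = a * (s - B / (2 * a)) * (s - B / (2 * a)))%R
    by (field; lra).
  assert (0 <= a * (s - B / (2 * a)) * (s - B / (2 * a)))%R.
  { rewrite Rmult_assoc. apply Rmult_le_pos. lra. pose proof (Rle_0_sqr (s - B/(2*a))). unfold Rsqr in H1. lra. }
  lra.
Qed.

Lemma exp_le x y : (x <= y)%R -> (exp x <= exp y)%R.
Proof. intros [H|H]. left; apply exp_increasing; auto. subst; lra. Qed.

Definition rr := exp (-1).
Lemma rr_pos : (0 < rr)%R. Proof. apply exp_pos. Qed.
Lemma rr_lt1 : (rr < 1)%R.
Proof. unfold rr. rewrite <- exp_0. apply exp_increasing. lra. Qed.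

Lemma exp_nat n : exp (- INR n) = (rr ^ n)%R.
Proof.
  induction n. simpl. rewrite Ropp_0, exp_0. auto.
  rewrite S_INR. simpl pow. rewrite <- IHn. unfold rr. rewrite <- exp_plus. f_equal. ring.
Qed.

Lemma geo_zrange N :
  (rsum (fun k => exp (- Rabs (IZR k))) (zrange N) <= 1 + 2 * rr / (1 - rr))%R.
Proof.
  assert (forall N, rsum (fun k => exp (- Rabs (IZR k))) (zrange N) = 1 + 2 * rr * (1 - rr ^ N) / (1 - rr))%R.
  { pose proof rr_lt1. induction N0.
    - unfold zrange, rsum; simpl. rewrite Rabs_R0, Ropp_0, exp_0. field. lra.
    - rewrite rsum_zrange_S, IHN0.
      rewrite opp_IZR, Rabs_Ropp, <- INR_IZR_INZ, Rabs_right by (apply Rle_ge, pos_INR).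
      rewrite exp_nat. simpl. field. lra. }
  rewrite H. pose proof rr_lt1. pose proof rr_pos.
  pose proof (pow_le rr N (Rlt_le _ _ H1)).
  assert (2 * rr * (1 - rr ^ N) / (1 - rr) <= 2 * rr / (1 - rr))%R.
  { unfold Rdiv. apply Rmult_le_compat_r. left; apply Rinv_0_lt_compat; lra. nra. }
  lra.
Qed.

Lemma gauss_bound a b c : (0 < a)%R -> exists M, forall N,
  (rsum (fun k => exp (- a * IZR k * IZR k + b * IZR k + c)) (zrange N) <= M)%R.
Proof.
  intros Ha. set (K := (c + (Rabs b + 1) * (Rabs b + 1) / (4 * a))%R).
  exists (exp K * (1 + 2 * rr / (1 - rr)))%R. intros N.
  eapply Rle_trans.
  - apply rsum_le with (h := fun k => (exp K * exp (- Rabs (IZR k)))%R).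
    intros k _. rewrite <- exp_plus. apply exp_le. pose proof (quad_bound a b c Ha (IZR k)). unfold K. lra.
  - rewrite rsum_scal. apply Rmult_le_compat_l. left; apply exp_pos. apply geo_zrange.
Qed.

Lemma gauss_summable (E : Z -> CC) a b c :
  (0 < a)%R -> (forall k, Re (E k) = - a * IZR k * IZR k + b * IZR k + c)%R ->
  exists M, forall N, (rsum (fun k => N1 (Cexp (E k))) (zrange N) <= M)%R.
Proof.
  intros Ha HE. destruct (gauss_bound a b c Ha) as [M HM]. exists (2 * M)%R. intros N.
  eapply Rle_trans. apply rsum_le with (h := fun k => (2 * exp (- a * IZR k * IZR k + b * IZR k + c))%R).
  intros k _. rewrite <- HE. apply N1_Cexp.
  rewrite rsum_scal. specialize (HM N). lra.
Qed.

Lemma piCi_Re z : Re (Cpi * Ci * ZtoC z) = 0%R.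
Proof. unfold Cpi, Ci, ZtoC, RtoC; simpl; ring. Qed.
Lemma piCi_Im z : Im (Cpi * Ci * ZtoC z) = (PI * IZR z)%R.
Proof. unfold Cpi, Ci, ZtoC, RtoC; simpl; ring. Qed.

Lemma phase_odd w : Cexp (Cpi * Ci * ZtoC (2 * w + 1)) = - CC1.
Proof.
  unfold Cexp at 1. rewrite piCi_Re, piCi_Im, exp_0.
  replace (PI * IZR (2 * w + 1))%R with (2 * (IZR w * PI) + PI)%R
      by (rewrite plus_IZR, mult_IZR; ring).
  rewrite neg_cos, cos_2a_sin, neg_sin, sin_2a, sin_eq_0_1 by (exists w; auto).
  apply CC_eq; simpl; ring.
Qed.

Lemma theta_partial_lsum tau z N : theta_partial tau z N = lsum (theta_term tau z) (zrange N).
Proof. unfold theta_partial, lsum, zrange. rewrite map_map. reflexivity. Qed.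

Section Theta.
Variable tau : CC.
Hypothesis Htau : (0 < Im tau)%R.

Definition th_exp (z : CC) (n : Z) : CC :=
  Cpi * Ci * tau * ((ZtoC n + RtoC (/ 2)) * (ZtoC n + RtoC (/ 2))) +
  ZtoC 2 * Cpi * Ci * (ZtoC n + RtoC (/ 2)) * (z + RtoC (/ 2)).

Lemma theta_term_exp z n : theta_term tau z n = Cexp (th_exp z n).
Proof. reflexivity. Qed.

Ltac reim := unfold Csub, Cadd, Copp, Cmul, Cpi, Ci, ZtoC, RtoC; cbn [Re Im].

Lemma th_exp_Re z n : Re (th_exp z n) =
  (- (PI * Im tau) * IZR n * IZR n + (- PI * Im tau - 2 * PI * Im z) * IZR n + (- PI * Im tau / 4 - PI * Im z))%R.
Proof. unfold th_exp. reim. field. Qed.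

Lemma theta_summable z : exists M, forall N, (rsum (fun k => N1 (theta_term tau z k)) (zrange N) <= M)%R.
Proof.
  apply (gauss_summable (th_exp z) (PI * Im tau)%R (- PI * Im tau - 2 * PI * Im z)%R (- PI * Im tau / 4 - PI * Im z)%R).
  pose proof PI_RGT_0. nra. apply th_exp_Re.
Qed.

Lemma theta_cv z : exists L, Ccv (theta_partial tau z) L.
Proof.
  destruct (theta_summable z) as [M HM].
  destruct (abs_summable (theta_term tau z) (fun k => N1 (theta_term tau z k)) M) as [L HL]; auto.
  intros; lra. exists L. apply (Ccv_ext (fun N => lsum (theta_term tau z) (zrange N))); auto.
  intros; symmetry; apply theta_partial_lsum.
Qed.

Lemma theta_val z L : Ccv (theta_partial tau z) L -> theta tau z = - L.
Proof.
  intros H. unfold theta. f_equal. apply (Ccv_unique (theta_partial tau z)); auto.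
  apply epsilon_spec. apply theta_cv.
Qed.

Definition al_exp (z : CC) (k : Z) : CC :=
  ZtoC 2 * Cpi * Ci * tau * (ZtoC k * ZtoC k) + ZtoC 4 * Cpi * Ci * ZtoC k * z + ZtoC 2 * Cpi * Ci * ZtoC k.
Definition be_exp (z : CC) (l : Z) : CC :=
  Cpi * Ci * tau * (ZtoC (2 * l + 1) * ZtoC (2 * l + 1)) * RtoC (/ 2) + ZtoC 2 * Cpi * Ci * ZtoC (2 * l + 1) * z.
Definition alpha z k := Cexp (al_exp z k).
Definition beta z l := Cexp (be_exp z l).

Lemma al_exp_Re z k : Re (al_exp z k) =
  (- (2 * PI * Im tau) * IZR k * IZR k + (- 4 * PI * Im z) * IZR k + 0)%R.
Proof. unfold al_exp. reim. field. Qed.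
Lemma be_exp_Re z k : Re (be_exp z k) =
  (- (2 * PI * Im tau) * IZR k * IZR k + (- 2 * PI * Im tau - 4 * PI * Im z) * IZR k + (- PI * Im tau / 2 - 2 * PI * Im z))%R.
Proof. unfold be_exp. reim. rewrite plus_IZR, mult_IZR. field. Qed.

Lemma alpha_summable z : exists M, forall N, (rsum (fun k => N1 (alpha z k)) (zrange N) <= M)%R.
Proof. eapply (gauss_summable (al_exp z)); [| apply al_exp_Re]. pose proof PI_RGT_0. apply Rmult_lt_0_compat; lra. Qed.
Lemma beta_summable z : exists M, forall N, (rsum (fun k => N1 (beta z k)) (zrange N) <= M)%R.
Proof. eapply (gauss_summable (be_exp z)); [| apply be_exp_Re]. pose proof PI_RGT_0. apply Rmult_lt_0_compat; lra. Qed.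

Lemma term1 x y k l :
  theta_term tau (x + y) (k + l) * theta_term tau (x - y) (k - l - 1) = alpha x k * beta y l.
Proof.
  rewrite !theta_term_exp. unfold alpha, beta. rewrite <- !Cexp_add. f_equal.
  unfold th_exp, al_exp, be_exp. apply CC_eq; reim; rewrite ?plus_IZR, ?minus_IZR, ?mult_IZR; field.
Qed.

Lemma term2 x y k l :
  theta_term tau (x + y) (k + l) * theta_term tau (x - y) (k - l) = - (beta x k * alpha y l).
Proof.
  rewrite !theta_term_exp. unfold alpha, beta. rewrite <- !Cexp_add.
  transitivity (Cexp (be_exp x k + al_exp y l + Cpi * Ci * ZtoC (2 * (k - l) + 1))).
  - f_equal. unfold th_exp, al_exp, be_exp. apply CC_eq; reim; rewrite ?plus_IZR, ?minus_IZR, ?mult_IZR; repeat rewrite ?plus_IZR, ?minus_IZR, ?mult_IZR; field.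
  - rewrite Cexp_add, phase_odd. ring.
Qed.
End Theta.

Lemma Un_cv_sub (u : nat -> R) l (phi : nat -> nat) :
  (forall n, (n <= S (phi n))%nat) -> Un_cv u l -> Un_cv (fun n => u (phi n)) l.
Proof.
  intros Hp H eps He. destruct (H eps He) as [N HN]. exists (S N). intros n Hn.
  apply HN. specialize (Hp n). lia.
Qed.

Definition phi1 (q : Z * Z) : Z * Z := (fst q + snd q, fst q - snd q - 1)%Z.
Definition phi2 (q : Z * Z) : Z * Z := (fst q + snd q, fst q - snd q)%Z.
Definition RN (N : nat) := map phi1 (Sq N) ++ map phi2 (Sq N).

Lemma NoDup_RN N : NoDup (RN N).
Proof.
  unfold RN. apply NoDup_app.
  - apply FinFun.Injective_map_NoDup. intros [a b] [c d] E. unfold phi1 in E; simpl in E. injection E; intros.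
    f_equal; lia. apply NoDup_Sq.
  - apply FinFun.Injective_map_NoDup. intros [a b] [c d] E. unfold phi2 in E; simpl in E. injection E; intros.
    f_equal; lia. apply NoDup_Sq.
  - intros p H1 H2. apply in_map_iff in H1, H2. destruct H1 as [[a b] [<- _]]. destruct H2 as [[c d] [E _]].
    unfold phi1, phi2 in E; simpl in E. injection E; intros. lia.
Qed.

Lemma RN_big N p : In p (RN N) -> In p (Sq (2 * N + 1)).
Proof.
  unfold RN. rewrite in_app_iff, !in_map_iff, In_Sq. intros [[[a b] [<- H]]|[[a b] [<- H]]];
  apply In_Sq in H; simpl in *; lia.
Qed.

Lemma RN_small N p : In p (Sq (N - 1)) -> In p (RN N).
Proof.
  destruct p as [n m]. rewrite In_Sq. simpl. intros H.
  unfold RN. rewrite in_app_iff, !in_map_iff.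
  destruct (Z.Even_or_Odd (n + m + 1)) as [[k Hk]|[k Hk]].
  - left. exists (k, (n - k)%Z). split. unfold phi1; simpl. f_equal; lia.
    apply In_Sq; simpl; lia.
  - right. exists (k, (n - k)%Z). split. unfold phi2; simpl. f_equal; lia.
    apply In_Sq; simpl; lia.
Qed.

Section Main.
Variable tau : CC.
Hypothesis Htau : (0 < Im tau)%R.

Definition thA (z : CC) : CC := epsilon (inhabits CC0) (fun L => Ccv (fun N => lsum (alpha tau z) (zrange N)) L).
Definition thB (z : CC) : CC := epsilon (inhabits CC0) (fun L => Ccv (fun N => lsum (beta tau z) (zrange N)) L).

Lemma thA_cv z : Ccv (fun N => lsum (alpha tau z) (zrange N)) (thA z).
Proof.
  unfold thA. apply epsilon_spec. destruct (alpha_summable tau Htau z) as [M HM].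
  eapply abs_summable; eauto. intros; lra.
Qed.
Lemma thB_cv z : Ccv (fun N => lsum (beta tau z) (zrange N)) (thB z).
Proof.
  unfold thB. apply epsilon_spec. destruct (beta_summable tau Htau z) as [M HM].
  eapply abs_summable; eauto. intros; lra.
Qed.

Lemma theta_R x y :
  theta tau (x + y) * theta tau (x - y) = thA x * thB y - thB x * thA y.
Proof.
  set (a := theta_term tau (x + y)). set (b := theta_term tau (x - y)).
  destruct (theta_cv tau Htau (x + y)) as [La HLa].
  destruct (theta_cv tau Htau (x - y)) as [Lb HLb].
  rewrite (theta_val tau Htau _ La HLa), (theta_val tau Htau _ Lb HLb).
  replace (- La * - Lb) with (La * Lb) by ring.
  assert (Ha : Ccv (fun N => lsum a (zrange N)) La).
  { apply (Ccv_ext (theta_partial tau (x + y))); auto. intros; apply theta_partial_lsum. }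
  assert (Hb : Ccv (fun N => lsum b (zrange N)) Lb).
  { apply (Ccv_ext (theta_partial tau (x - y))); auto. intros; apply theta_partial_lsum. }
  assert (HU := Ccv_mul _ _ _ _ Ha Hb).
  destruct (theta_summable tau Htau (x + y)) as [Ma HMa].
  destruct (theta_summable tau Htau (x - y)) as [Mb HMb].
  destruct (rsum_zrange_cv (fun k => N1 (a k)) Ma (fun k => N1_ge0 _) HMa) as [Pa HPa].
  destruct (rsum_zrange_cv (fun k => N1 (b k)) Mb (fun k => N1_ge0 _) HMb) as [Pb HPb].
  set (Q := fun M => (rsum (fun k => N1 (a k)) (zrange M) * rsum (fun k => N1 (b k)) (zrange M))%R).
  assert (HQ : Un_cv Q (Pa * Pb)%R) by (apply CV_mult; auto).
  set (e := fun N => (Q (2 * N + 1)%nat - Q (N - 1)%nat)%R).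
  assert (He : Un_cv e 0%R).
  { replace 0%R with (Pa * Pb - Pa * Pb)%R by ring. apply CV_minus.
    apply (Un_cv_sub Q _ (fun N => 2 * N + 1)%nat); auto. intros; lia.
    apply (Un_cv_sub Q _ (fun N => N - 1)%nat); auto. intros; lia. }
  set (V := fun N => lsum (alpha tau x) (zrange N) * lsum (beta tau y) (zrange N)
                     - lsum (beta tau x) (zrange N) * lsum (alpha tau y) (zrange N)).
  assert (HV : Ccv V (thA x * thB y - thB x * thA y)).
  { apply Ccv_sub; apply Ccv_mul; auto using thA_cv, thB_cv. }
  assert (HUV : Ccv (fun N => lsum a (zrange N) * lsum b (zrange N)) (thA x * thB y - thB x * thA y)).
  { apply (Ccv_close _ V e); auto. intros N.
    set (F := fun p : Z * Z => a (fst p) * b (snd p)).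
    set (mu := fun p : Z * Z => (N1 (a (fst p)) * N1 (b (snd p)))%R).
    assert (E1 : lsum a (zrange N) * lsum b (zrange N) = lsum F (Sq N)).
    { unfold F, Sq. rewrite (lsum_prod a b). auto. }
    assert (E2 : V N = lsum F (RN N)).
    { unfold RN. rewrite lsum_app, !lsum_map. unfold V.
      rewrite (lsum_ext_in (fun x0 => F (phi1 x0)) (fun p => alpha tau x (fst p) * beta tau y (snd p))).
      rewrite (lsum_ext_in (fun x0 => F (phi2 x0)) (fun p => - (beta tau x (fst p) * alpha tau y (snd p)))).
      unfold Sq. rewrite lsum_opp, (lsum_prod (alpha tau x) (beta tau y)), (lsum_prod (beta tau x) (alpha tau y)). ring.
      intros [k l] _. unfold F, phi2; simpl. unfold a, b. apply term2.
      intros [k l] _. unfold F, phi1; simpl. unfold a, b. apply term1. }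
    rewrite E1, E2.
    assert (EQ : forall M, Q M = rsum mu (Sq M)).
    { intros M. unfold Q, mu, Sq. rewrite (rsum_prod (fun k => N1 (a k)) (fun k => N1 (b k))). auto. }
    unfold e. rewrite !EQ.
    apply (compare_sums ZZeq_dec F mu (Sq (N - 1)) (Sq N) (RN N) (Sq (2 * N + 1))).
    - apply NoDup_Sq.
    - apply NoDup_Sq.
    - apply NoDup_RN.
    - apply NoDup_Sq.
    - intros p. rewrite !In_Sq. lia.
    - apply RN_small.
    - intros p. rewrite !In_Sq. lia.
    - apply RN_big.
    - intros p. unfold F, mu. apply N1_mul. }
  eapply Ccv_unique; eauto.
Qed.
End Main.

Lemma bits_length J l : In l (bits J) -> length l = J.
Proof.
  revert l; induction J; simpl; intros l H. destruct H as [<-|[]]; auto.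
  apply in_app_iff in H. destruct H as [H|H]; apply in_map_iff in H; destruct H as [l' [<- H]]; simpl; f_equal; auto.
Qed.

Lemma ones_cons b l : ones (b :: l) = (b2Z b + ones l)%Z.
Proof. unfold ones. destruct b; cbn [filter length b2Z]; lia. Qed.

Lemma ones_bound l : (0 <= ones l <= Z.of_nat (length l))%Z.
Proof. induction l. unfold ones; simpl; lia. rewrite ones_cons. destruct a; cbn [length b2Z]; lia. Qed.

Lemma filter_map_swap {A B} (P : B -> bool) (g : A -> B) l :
  filter P (map g l) = map g (filter (fun x => P (g x)) l).
Proof. induction l; simpl; auto. destruct (P (g a)); simpl; rewrite IHl; auto. Qed.

Lemma Csum_app l1 l2 : Csum (l1 ++ l2) = Csum l1 + Csum l2.
Proof. induction l1; simpl. ring. rewrite IHl1; ring. Qed.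

Section W.
Variables (f : CC -> CC) (eta Lam lam : CC).

Lemma Phi_val l : Phi eta lam l = lam + ZtoC 2 * eta * ZtoC (2 * ones l - Z.of_nat (length l)).
Proof.
  induction l; simpl Phi. unfold ones; cbn [length filter]. replace (ZtoC (2 * Z.of_nat 0 - Z.of_nat 0)) with CC0 by reflexivity. ring.
  rewrite IHl, ones_cons. simpl length. rewrite Nat2Z.inj_succ.
  destruct a; simpl b2Z; rewrite !ZtoC_sub, !ZtoC_mul, !ZtoC_add, ?ZtoC_add; unfold Z.succ; rewrite ?ZtoC_add, ZtoC_1, ?ZtoC_0, !ZtoC_2; ring.
Qed.

Definition G (J : nat) (i j : Z) (v : CC) : CC :=
  Wfused f eta Lam J i j (i + j - Z.of_nat J) (Z.of_nat J) v lam.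

Lemma Wfused_out J i j i2 j2 v : (j < 0 \/ Z.of_nat J < j)%Z -> Wfused f eta Lam J i j i2 j2 v lam = CC0.
Proof.
  intros H. unfold Wfused.
  replace (filter (fun l => (ones l =? j)%Z) (bits J)) with (@nil (list bool)). reflexivity.
  symmetry. generalize (bits_length J). induction (bits J); intros HL; simpl; auto.
  replace (ones a =? j)%Z with false. apply IHl. intros; apply HL; simpl; auto.
  symmetry; apply Z.eqb_neq. pose proof (ones_bound a). rewrite (HL a (or_introl eq_refl)) in H0. lia.
Qed.

Lemma G_out J i j v : (j < 0 \/ Z.of_nat J < j)%Z -> G J i j v = CC0.
Proof. intros; unfold G; apply Wfused_out; auto. Qed.

Lemma Csum_map_lsum {A} (g : A -> CC) l : Csum (map g l) = lsum g l.
Proof. reflexivity. Qed.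

Lemma G_rec J i j v : (0 <= i)%Z ->
  G (S J) i j v =
    W1 f eta i false (i - 1) true v (lam + ZtoC 2 * eta * ZtoC (2 * j - Z.of_nat J)) Lam * G J (i - 1) j (v + ZtoC 2 * eta)
  + W1 f eta i true i true v (lam + ZtoC 2 * eta * ZtoC (2 * (j - 1) - Z.of_nat J)) Lam * G J i (j - 1) (v + ZtoC 2 * eta).
Proof.
  intros Hi. unfold G, Wfused. rewrite !Nat2Z.id, !Nat.sub_diag.
  assert (E1 : (i + j - Z.of_nat (S J) = i - 1 + j - Z.of_nat J)%Z) by lia.
  assert (E2 : (i + j - Z.of_nat (S J) = i + (j - 1) - Z.of_nat J)%Z) by lia.
  set (i2 := (i + j - Z.of_nat (S J))%Z) in *. cbn [repeat].
  simpl bits. rewrite filter_app, !filter_map_swap, map_app, !map_map, Csum_app.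
  rewrite !Csum_map_lsum.
  rewrite (filter_ext (fun x : list bool => (ones (false :: x) =? j)%Z) (fun l => (ones l =? j)%Z)).
  2:{ intros; rewrite ones_cons; simpl b2Z; f_equal. }
  rewrite (filter_ext (fun x : list bool => (ones (true :: x) =? j)%Z) (fun l => (ones l =? j - 1)%Z)).
  2:{ intros y; rewrite ones_cons; simpl b2Z.
    destruct (Z.eqb_spec (1 + ones y) j), (Z.eqb_spec (ones y) (j - 1)); auto; lia. }
  rewrite <- !lsum_scal. f_equal.
  - apply lsum_ext_in. intros l Hl. apply filter_In in Hl. destruct Hl as [Hb Ho].
    apply Z.eqb_eq in Ho.
    unfold Wcol. simpl Wcol_aux at 1.
    replace (i <? 0)%Z with false by (symmetry; apply Z.ltb_ge; lia).
    rewrite Phi_val, (bits_length J l Hb), Ho. simpl b2Z.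
    replace (i + 0 - 1)%Z with (i - 1)%Z by lia.
    rewrite E1. reflexivity.
  - apply lsum_ext_in. intros l Hl. apply filter_In in Hl. destruct Hl as [Hb Ho].
    apply Z.eqb_eq in Ho.
    unfold Wcol. simpl Wcol_aux at 1.
    replace (i <? 0)%Z with false by (symmetry; apply Z.ltb_ge; lia).
    rewrite Phi_val, (bits_length J l Hb), Ho. simpl b2Z.
    replace (i + 1 - 1)%Z with i by lia.
    rewrite E2. reflexivity.
Qed.
End W.

Section Alg.
Variables (f : CC -> CC) (Af Bf : CC -> CC) (eta Lam lam : CC).
Hypothesis HR : forall a b, f (a + b) * f (a - b) = Af a * Bf b - Bf a * Af b.
Notation X := (ZtoC 2 * eta).
Hypothesis Hx : forall m : Z, m <> 0%Z -> f (ZtoC 2 * eta * ZtoC m) <> CC0.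
Hypothesis Hl : forall m : Z, f (lam + ZtoC 2 * eta * ZtoC m) <> CC0.
Definition Hp (v : CC) := forall m : Z, f (eta * Lam - v + ZtoC 2 * eta * ZtoC m) <> CC0.

Definition pn (a : CC) (k : nat) : CC := Cprod_nat k (fun m => f (a - ZtoC 2 * eta * ZtoC (Z.of_nat m))).

Lemma pn_0 a : pn a 0 = CC1. Proof. reflexivity. Qed.
Lemma pn_Sr a k : pn a (S k) = pn a k * f (a - ZtoC 2 * eta * ZtoC (Z.of_nat k)).
Proof. reflexivity. Qed.
Lemma pn_Sl a k : pn a (S k) = f a * pn (a - ZtoC 2 * eta) k.
Proof.
  revert a. induction k; intros a.
  - unfold pn; simpl. replace (a - ZtoC 2 * eta * ZtoC 0) with a. ring.
    rewrite ZtoC_0. ring.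
  - rewrite pn_Sr, IHk, pn_Sr. rewrite Nat2Z.inj_succ. unfold Z.succ.
    replace (a - ZtoC 2 * eta * ZtoC (Z.of_nat k + 1)) with (a - ZtoC 2 * eta - ZtoC 2 * eta * ZtoC (Z.of_nat k)).
    ring. rewrite ZtoC_add, ZtoC_1. ring.
Qed.

Lemma Cprod_nz k g : (forall m, (m < k)%nat -> g m <> CC0) -> Cprod_nat k g <> CC0.
Proof. induction k; intros H; simpl. apply CC1_neq_0. apply Cmul_neq0; auto. Qed.

Lemma f_nz_X (a : CC) (m : Z) : a = ZtoC 2 * eta * ZtoC m -> m <> 0%Z -> f a <> CC0.
Proof. intros -> H; auto. Qed.
Lemma f_nz_l (a : CC) (m : Z) : a = lam + ZtoC 2 * eta * ZtoC m -> f a <> CC0.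
Proof. intros ->; auto. Qed.
Lemma f_nz_p v (a : CC) (m : Z) : Hp v -> a = eta * Lam - v + ZtoC 2 * eta * ZtoC m -> f a <> CC0.
Proof. intros H ->; auto. Qed.

Lemma pn_nz_X (a : CC) (z : Z) k : a = ZtoC 2 * eta * ZtoC z -> (forall m, (m < k)%nat -> z - Z.of_nat m <> 0)%Z -> pn a k <> CC0.
Proof. intros -> H. apply Cprod_nz. intros m Hm. apply (f_nz_X _ (z - Z.of_nat m)). rewrite ZtoC_sub; ring. auto. Qed.
Lemma pn_nz_l (a : CC) (z : Z) k : a = lam + ZtoC 2 * eta * ZtoC z -> pn a k <> CC0.
Proof. intros ->. apply Cprod_nz. intros m Hm. apply (f_nz_l _ (z - Z.of_nat m)). rewrite ZtoC_sub; ring. Qed.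
Lemma pn_nz_p v (a : CC) (z : Z) k : Hp v -> a = eta * Lam - v + ZtoC 2 * eta * ZtoC z -> pn a k <> CC0.
Proof. intros Hv ->. apply Cprod_nz. intros m Hm. apply (f_nz_p v _ (z - Z.of_nat m)); auto. rewrite ZtoC_sub; ring. Qed.

Lemma Hp_shift v : Hp v -> Hp (v + ZtoC 2 * eta).
Proof. intros H m. replace (eta * Lam - (v + ZtoC 2 * eta) + ZtoC 2 * eta * ZtoC m) with
  (eta * Lam - v + ZtoC 2 * eta * ZtoC (m - 1)). auto. rewrite ZtoC_sub, ZtoC_1. ring. Qed.

Lemma f0 : f CC0 = CC0.
Proof.
  pose proof (HR eta eta). replace (Af eta * Bf eta - Bf eta * Af eta) with CC0 in H by ring.
  replace (eta - eta) with CC0 in H by ring.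
  assert (f (eta + eta) <> CC0).
  { apply (f_nz_X _ 1). rewrite ZtoC_1, ZtoC_2. ring. lia. }
  transitivity (Cinv (f (eta + eta)) * (f (eta + eta) * f CC0)). field; auto.
  rewrite H. ring.
Qed.

Definition CF (n jn : nat) (i : Z) (v : CC) : CC :=
  Cinv (Cpow (f (ZtoC 2 * eta)) n)
  * (pn (ZtoC 2 * eta * ZtoC (Z.of_nat (n + jn))) (n + jn)
     / (pn (ZtoC 2 * eta * (ZtoC (Z.of_nat (n + jn)) - ZtoC (Z.of_nat jn))) n * pn (ZtoC 2 * eta * ZtoC (Z.of_nat jn)) jn))
  * ((pn (ZtoC 2 * eta * ZtoC i) n
      * pn (ZtoC 2 * eta * (ZtoC i + ZtoC (Z.of_nat jn) - ZtoC (Z.of_nat (n + jn))) - eta * Lam - v) jn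
      * pn (ZtoC 2 * eta * (Lam - ZtoC i - ZtoC (Z.of_nat jn) + ZtoC (Z.of_nat (n + jn)))) n)
     / pn (eta * Lam - v) (n + jn))
  * ((pn (lam + ZtoC 2 * eta * (ZtoC i + ZtoC (Z.of_nat jn) - ZtoC (Z.of_nat (n + jn))) - eta * Lam - v) n
      * pn (lam + ZtoC 2 * eta * (ZtoC i + ZtoC 2 * ZtoC (Z.of_nat jn) - ZtoC (Z.of_nat (n + jn)) - Lam - CC1)) jn)
     / (pn (lam + ZtoC 2 * eta * ZtoC (Z.of_nat jn)) n
        * pn (lam + ZtoC 2 * eta * (ZtoC 2 * ZtoC (Z.of_nat jn) - ZtoC (Z.of_nat (n + jn)) - CC1)) jn)).

Definition Wtt (k : Z) (v lamp : CC) : CC :=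
  f (eta * (ZtoC 2 * ZtoC k - Lam) - v) * f (lamp + ZtoC 2 * eta * (ZtoC k - Lam)) / (f (eta * Lam - v) * f lamp).
Definition Wft (k : Z) (v lamp : CC) : CC :=
  f (lamp - v + eta * (ZtoC 2 * ZtoC k - ZtoC 2 - Lam)) * f (ZtoC 2 * eta * (Lam + CC1 - ZtoC k)) * f (ZtoC 2 * ZtoC k * eta)
  / (f (eta * Lam - v) * f lamp * f (ZtoC 2 * eta)).

Lemma W1_tt k v lamp : (0 <= k)%Z -> W1 f eta k true k true v lamp Lam = Wtt k v lamp.
Proof. intros H. unfold W1, Wtt. replace (k <? 0)%Z with false by (symmetry; apply Z.ltb_ge; lia). rewrite Z.eqb_refl. reflexivity. Qed.
Lemma W1_ft k v lamp : (1 <= k)%Z -> W1 f eta k false (k - 1) true v lamp Lam = Wft k v lamp.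
Proof. intros H. unfold W1, Wft. replace (k <? 0)%Z with false by (symmetry; apply Z.ltb_ge; lia).
  rewrite Z.eqb_refl. replace (1 <=? k)%Z with true by (symmetry; apply Z.leb_le; lia). reflexivity. Qed.
Lemma W1_ft0 v lamp : W1 f eta 0 false (0 - 1) true v lamp Lam = CC0.
Proof. reflexivity. Qed.
Lemma Wft0 v lamp : Wft 0 v lamp = CC0.
Proof. unfold Wft. replace (ZtoC 2 * ZtoC 0 * eta) with CC0 by (rewrite ZtoC_0; ring). rewrite f0. unfold Cdiv. ring. Qed.

Definition fm (a : CC) := f a.
Definition fn (a : CC) := f a.
Definition pm (a : CC) (k : nat) := pn a k.
Definition pq (a : CC) (k : nat) := pn a k.
Ltac unif_f2 :=
  repeat (match goal with
   | |- context [f ?a] =>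
       change (f a) with (fm a);
       repeat (match goal with |- context [f ?b] =>
                 first [ replace b with a by (rewrite ?ZtoC_2; ring); change (f a) with (fm a)
                       | change (f b) with (fn b) ] end);
       unfold fn
   end);
  unfold fm.
Ltac unif_pn2 :=
  repeat (match goal with
   | |- context [pn ?a ?k] =>
       change (pn a k) with (pm a k);
       repeat (match goal with |- context [pn ?b k] =>
                 first [ replace b with a by (rewrite ?ZtoC_2; ring); change (pn a k) with (pm a k)
                       | change (pn b k) with (pq b k) ] end);
       unfold pq
   end);
  unfold pm.
Ltac unif_f :=
  repeat match goal with
  |- context [f ?a] =>
     match goal with
     |- context [f ?b] =>
        tryif constr_eq a b then fail else
        (replace b with a by (rewrite ?ZtoC_2; ring))
     end
  end.
Ltac unif_pn :=
  repeat match goal with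
  |- context [pn ?a ?k] =>
     match goal with
     |- context [pn ?b k] =>
        tryif constr_eq a b then fail else
        (replace b with a by (rewrite ?ZtoC_2; ring))
     end
  end.

Lemma ZtoC_S n : ZtoC (Z.of_nat (S n)) = ZtoC (Z.of_nat n) + CC1.
Proof. rewrite Nat2Z.inj_succ. unfold Z.succ. rewrite ZtoC_add. reflexivity. Qed.
Lemma ZtoC_plus n m : ZtoC (Z.of_nat (n + m)) = ZtoC (Z.of_nat n) + ZtoC (Z.of_nat m).
Proof. rewrite Nat2Z.inj_add, ZtoC_add. reflexivity. Qed.

Lemma Cpow_nz c k : c <> CC0 -> Cpow c k <> CC0.
Proof. intros H; induction k; simpl. apply CC1_neq_0. apply Cmul_neq0; auto. Qed.

Ltac reZ e :=
  lazymatch e with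
  | ZtoC ?z => z
  | CC1 => constr:(1%Z)
  | CC0 => constr:(0%Z)
  | ?a + ?b => let x := reZ a in let y := reZ b in constr:((x + y)%Z)
  | ?a - ?b => let x := reZ a in let y := reZ b in constr:((x - y)%Z)
  | ?a * ?b => let x := reZ a in let y := reZ b in constr:((x * y)%Z)
  | - ?a => let x := reZ a in constr:((- x)%Z)
  end.
Ltac reX e :=
  lazymatch e with
  | ZtoC 2 * eta * ?E => reZ E
  | ZtoC 2 * ?E * eta => reZ E
  | ZtoC 2 * eta => constr:(1%Z)
  | ?a + ?b => let x := reX a in let y := reX b in constr:((x + y)%Z)
  | ?a - ?b => let x := reX a in let y := reX b in constr:((x - y)%Z)
  | - ?a => let x := reX a in constr:((- x)%Z)
  | _ => constr:(0%Z)
  end.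
Ltac znorm := change (Z.of_nat 0) with 0%Z;
  repeat (rewrite ?ZtoC_add, ?ZtoC_sub, ?ZtoC_mul, ?ZtoC_opp, ?ZtoC_S, ?ZtoC_plus);
  rewrite ?ZtoC_1, ?ZtoC_0.
Ltac zeq := repeat (rewrite ?ZtoC_add, ?ZtoC_sub, ?ZtoC_mul, ?ZtoC_opp, ?ZtoC_S, ?ZtoC_plus);
  rewrite ?ZtoC_1, ?ZtoC_0, ?ZtoC_2; ring.
Ltac nz1 :=
  lazymatch goal with
  | |- pn ?a ?k <> CC0 =>
      let z := reX a in
      first [ apply (pn_nz_l a z k); zeq
            | eapply (pn_nz_p _ a z k); [eassumption | zeq]
            | apply (pn_nz_X a z k); [zeq | intros; lia] ]
  | |- f ?a <> CC0 =>
      let z := reX a in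
      first [ apply (f_nz_l a z); zeq
            | eapply (f_nz_p _ a z); [eassumption | zeq]
            | apply (f_nz_X a z); [zeq | lia] ]
  | |- Cpow ?c ?k <> CC0 => apply Cpow_nz; nz1
  | |- CC1 <> CC0 => apply CC1_neq_0
  | |- {| Re := R1; Im := R0 |} <> CC0 => apply CC1_neq_0
  | |- ?a * ?b <> CC0 => apply Cmul_neq0; nz1
  | |- Cinv ?a <> CC0 => apply Cinv_neq0; nz1
  end.
Ltac nzall := repeat split; nz1.

Lemma L_n0 J i v : Hp v ->
  CF 0 (S J) i v = Wtt i v (lam + ZtoC 2 * eta * ZtoC (2 * (Z.of_nat (S J) - 1) - Z.of_nat J)) * CF 0 J i (v + ZtoC 2 * eta).
Proof.
  intros Hv. unfold CF. rewrite !Nat.add_0_l, !pn_0.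
  replace (2 * (Z.of_nat (S J) - 1) - Z.of_nat J)%Z with (Z.of_nat J) by lia.
  unfold Wtt. rewrite !ZtoC_S.
  rewrite !pn_Sl. 
  unif_pn. unif_f.
  simpl Cpow. field. nzall.
Qed.

Lemma L_j0 J i v : Hp v ->
  CF (S J) 0 i v = Wft i v (lam + ZtoC 2 * eta * ZtoC (2 * Z.of_nat 0 - Z.of_nat J)) * CF J 0 (i - 1) (v + ZtoC 2 * eta).
Proof.
  intros Hv. unfold CF. rewrite !Nat.add_0_r, !pn_0.
  unfold Wft. znorm.
  rewrite (pn_Sr (ZtoC 2 * eta * (Lam - _ - _ + _))).
  rewrite (pn_Sr (lam + ZtoC 2 * eta * _)).
  rewrite !pn_Sl.
  unif_pn. unif_f.
  simpl Cpow. field. nzall.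
Qed.

Lemma pn_down a k : f (a - ZtoC 2 * eta * ZtoC (Z.of_nat k)) <> CC0 ->
  pn a k = f a * pn (a - ZtoC 2 * eta) k / f (a - ZtoC 2 * eta * ZtoC (Z.of_nat k)).
Proof.
  intros H. rewrite <- pn_Sl, pn_Sr. field. auto.
Qed.

Lemma KRp a0 b0 c0 L :
  f (a0 + b0) * f (a0 - b0 + L) * (f (c0 + L) * f c0) =
  f b0 * f (L - b0) * (f (c0 + a0 + L) * f (c0 - a0))
  + f (a0 + L) * f a0 * (f (c0 + b0) * f (c0 - b0 + L)).
Proof.
  assert (H2 : CC1 + CC1 <> CC0) by (rewrite <- ZtoC_2; apply ZtoC_neq0; lia).
  set (h := L * Cinv (CC1 + CC1)).
  assert (HL : L = h + h) by (unfold h; field; auto).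
  set (al := a0 + h). set (be := b0 - h). set (ga := c0 + h). set (de := h).
  assert (E1 : f (a0 + b0) * f (a0 - b0 + L) = Af al * Bf be - Bf al * Af be).
  { rewrite <- HR. f_equal; f_equal; unfold al, be; [ring | rewrite HL; ring]. }
  assert (E2 : f (c0 + L) * f c0 = Af ga * Bf de - Bf ga * Af de).
  { rewrite <- HR. f_equal; f_equal; unfold ga, de; [rewrite HL; ring | ring]. }
  assert (E3 : f b0 * f (L - b0) = Af de * Bf be - Bf de * Af be).
  { rewrite <- HR. f_equal; f_equal; unfold de, be; [ring | rewrite HL; ring]. }
  assert (E4 : f (c0 + a0 + L) * f (c0 - a0) = Af ga * Bf al - Bf ga * Af al).
  { rewrite <- HR. f_equal; f_equal; unfold ga, al; [rewrite HL; ring | ring]. }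
  assert (E5 : f (a0 + L) * f a0 = Af al * Bf de - Bf al * Af de).
  { rewrite <- HR. f_equal; f_equal; unfold al, de; [rewrite HL; ring | ring]. }
  assert (E6 : f (c0 + b0) * f (c0 - b0 + L) = Af ga * Bf be - Bf ga * Af be).
  { rewrite <- HR. f_equal; f_equal; unfold ga, be; [ring | rewrite HL; ring]. }
  rewrite E1, E2, E3, E4, E5, E6. ring.
Qed.


Lemma L3 n j i v : Hp v ->
  CF (S n) (S j) i v =
    Wft i v (lam + ZtoC 2 * eta * ZtoC (2 * Z.of_nat (S j) - Z.of_nat (n + S j))) * CF n (S j) (i - 1) (v + ZtoC 2 * eta)
  + Wtt i v (lam + ZtoC 2 * eta * ZtoC (2 * (Z.of_nat (S j) - 1) - Z.of_nat (n + S j))) * CF (S n) j i (v + ZtoC 2 * eta).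
Proof.
  intros Hv. unfold CF, Wft, Wtt.
  rewrite !Nat.add_succ_l, !Nat.add_succ_r.
  znorm.
  repeat rewrite (pn_Sr (ZtoC 2 * eta * (Lam - _ - _ + _)) n).
  rewrite (pn_Sr (ZtoC 2 * eta * _ - eta * Lam - (v + ZtoC 2 * eta)) j).
  rewrite (pn_Sr (lam + ZtoC 2 * eta * _ - eta * Lam - (v + ZtoC 2 * eta)) n).
  rewrite (pn_Sr (lam + ZtoC 2 * eta * ZtoC (Z.of_nat j)) n).
  rewrite !pn_Sl.
  unif_pn2.
  rewrite (pn_down (lam + ZtoC 2 * eta * (ZtoC (Z.of_nat j) + CC1)) n).
  rewrite (pn_down (lam + ZtoC 2 * eta * (ZtoC 2 * (ZtoC (Z.of_nat j) + CC1) - (ZtoC (Z.of_nat n) + ZtoC (Z.of_nat j) + CC1) - CC1) - ZtoC 2 * eta) j).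
  unif_pn.
  pose proof (KRp (ZtoC 2 * eta * (ZtoC (Z.of_nat j) + CC1)) (ZtoC 2 * eta * (ZtoC (Z.of_nat n) + CC1)) (ZtoC 2 * eta * (ZtoC i - ZtoC (Z.of_nat n) - CC1) - eta * Lam - v) lam) as KR.
  revert KR. unif_f2. intros KR.
  simpl Cpow.
  field [KR].
  all: nzall.
Qed.

Lemma CF_i0 n jn v : CF (S n) jn 0 v = CC0.
Proof.
  unfold CF. rewrite (pn_Sl (ZtoC 2 * eta * ZtoC 0)).
  replace (ZtoC 2 * eta * ZtoC 0) with CC0 at 1 by (rewrite ZtoC_0; ring). rewrite f0.
  unfold Cdiv. ring.
Qed.

Lemma CF_00 i v : CF 0 0 i v = CC1.
Proof. unfold CF. simpl Cpow. rewrite !pn_0. field. apply CC1_neq_0. Qed.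

Theorem main_ind J : forall v, Hp v -> forall i, (0 <= i)%Z -> forall n jn, (n + jn = J)%nat ->
  G f eta Lam lam J i (Z.of_nat jn) v = CF n jn i v.
Proof.
  induction J; intros v Hv i Hi n jn Hnj.
  - assert (n = 0%nat) by lia. assert (jn = 0%nat) by lia. subst. rewrite CF_00.
    unfold G, Wfused. simpl bits. simpl filter. simpl map. unfold Wcol. simpl Wcol_aux.
    replace (i <? 0)%Z with false by (symmetry; apply Z.ltb_ge; lia).
    simpl Csum. replace (i =? i + 0 - 0)%Z with true by (symmetry; apply Z.eqb_eq; lia). ring.
  - rewrite G_rec by auto.
    assert (Hv' := Hp_shift v Hv).
    destruct jn as [|j'].
    +
      assert (n = S J) by lia. subst n.
      rewrite (G_out f eta Lam lam J i (Z.of_nat 0 - 1)) by lia.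
      destruct (Z.eq_dec i 0) as [->|Hi1].
      * rewrite W1_ft0, CF_i0. ring.
      * rewrite W1_ft by lia. rewrite IHJ with (n := J) (jn := 0%nat); auto; try lia.
        rewrite L_j0 by auto. ring.
    + destruct n as [|n'].
      *
        assert (j' = J) by lia. subst j'.
        rewrite (G_out f eta Lam lam J (i - 1) (Z.of_nat (S J))) by lia.
        replace (Z.of_nat (S J) - 1)%Z with (Z.of_nat J) by lia.
        rewrite W1_tt by lia. rewrite IHJ with (n := 0%nat) (jn := J); auto; try lia.
        rewrite L_n0 by auto. replace (2 * (Z.of_nat (S J) - 1) - Z.of_nat J)%Z with (2 * Z.of_nat J - Z.of_nat J)%Z by lia. ring.
      * assert (HJ : J = (n' + S j')%nat) by lia. subst J.
        replace (Z.of_nat (S j') - 1)%Z with (Z.of_nat j') by lia.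
        rewrite W1_tt by lia. rewrite IHJ with (n := S n') (jn := j'); auto; try lia.
        destruct (Z.eq_dec i 0) as [->|Hi1].
        -- rewrite W1_ft0, L3 by auto. rewrite Wft0.
           replace (2 * (Z.of_nat (S j') - 1) - Z.of_nat (n' + S j'))%Z with (2 * Z.of_nat j' - Z.of_nat (n' + S j'))%Z by lia.
           ring.
        -- rewrite W1_ft by lia. rewrite IHJ with (n := n') (jn := S j'); auto; try lia.
           rewrite L3 by auto.
           replace (2 * (Z.of_nat (S j') - 1) - Z.of_nat (n' + S j'))%Z with (2 * Z.of_nat j' - Z.of_nat (n' + S j'))%Z by lia.
           reflexivity.
Qed.
End Alg.

Lemma fval_R fk tau : (0 < Im tau)%R -> exists Af Bf : CC -> CC,
  forall a b, fval fk tau (a + b) * fval fk tau (a - b) = Af a * Bf b - Bf a * Af b.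
Proof.
  intros Ht. destruct fk.
  - exists (thA tau), (thB tau). intros a b. apply theta_R; auto.
  - exists sinA, (fun _ => CC1). intros a b. simpl. apply sin_R.
Qed.

Lemma poch_pn f eta a k : poch f eta a (Z.of_nat k) = pn f eta a k.
Proof. unfold poch, pn. replace (0 <=? Z.of_nat k)%Z with true by (symmetry; apply Z.leb_le; lia).
  rewrite Nat2Z.id. reflexivity. Qed.

Lemma Cpowz_neg c n jn : Cpowz c (Z.of_nat jn - Z.of_nat (n + jn)) = Cinv (Cpow c n).
Proof.
  unfold Cpowz. destruct n.
  - rewrite Nat.add_0_l, Z.sub_diag. simpl. apply CC_eq; simpl; field.
  - replace (0 <=? Z.of_nat jn - Z.of_nat (S n + jn))%Z with false by (symmetry; apply Z.leb_gt; lia).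
    f_equal. f_equal. lia.
Qed.

Theorem proposition4p4 (fk : fkind) (eta tau Lam v lam : CC) (i : nat) (J : nat)
  (j : Z) :
  (0 < Im tau)%R ->
  (0 < J)%nat ->
  (* genericity: all denominators occurring below are nonzero *)
  (forall m : Z, m <> 0%Z -> fval fk tau (ZtoC 2 * eta * ZtoC m) <> CC0) ->
  (forall m : Z, fval fk tau (eta * Lam - v + ZtoC 2 * eta * ZtoC m) <> CC0) ->
  (forall m : Z, fval fk tau (lam + ZtoC 2 * eta * ZtoC m) <> CC0) ->
  let f := fval fk tau in
  let JZ := Z.of_nat J in
  let iZ := Z.of_nat i in
  let two := ZtoC 2 in
  let jC := ZtoC j in
  let JC := ZtoC JZ in
  let iC := ZtoC iZ in
  ((j < 0)%Z \/ (JZ < j)%Z ->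
     Wfused f eta Lam J iZ j (iZ + j - JZ) JZ v lam = CC0) /\
  ((0 <= j)%Z /\ (j <= JZ)%Z ->
     Wfused f eta Lam J iZ j (iZ + j - JZ) JZ v lam =
       Cpowz (f (two * eta)) (j - JZ)
       * (poch f eta (two * eta * JC) JZ
          / (poch f eta (two * eta * (JC - jC)) (JZ - j)
             * poch f eta (two * eta * jC) j))
       * ((poch f eta (two * eta * iC) (JZ - j)
           * poch f eta (two * eta * (iC + jC - JC) - eta * Lam - v) j
           * poch f eta (two * eta * (Lam - iC - jC + JC)) (JZ - j))
          / poch f eta (eta * Lam - v) JZ)
       * ((poch f eta (lam + two * eta * (iC + jC - JC) - eta * Lam - v) (JZ - j)
           * poch f eta (lam + two * eta * (iC + two * jC - JC - Lam - CC1)) j)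
          / (poch f eta (lam + two * eta * jC) (JZ - j)
             * poch f eta (lam + two * eta * (two * jC - JC - CC1)) j))).
Proof.
  intros Htau HJ Hx Hp0 Hl. cbv zeta.
  destruct (fval_R fk tau Htau) as [Af [Bf HR]].
  split.
  - intros H. apply Wfused_out. auto.
  - intros [H0 H1].
    set (jn := Z.to_nat j). set (n := (J - jn)%nat).
    assert (Ej : j = Z.of_nat jn) by (unfold jn; lia).
    assert (EJ : J = (n + jn)%nat) by (unfold n, jn; lia).
    assert (Ed : (Z.of_nat J - j = Z.of_nat n)%Z) by lia.
    rewrite Ed. rewrite Ej. clearbody jn n. subst J.
    change (Wfused (fval fk tau) eta Lam (n + jn) (Z.of_nat i) (Z.of_nat jn)
      (Z.of_nat i + Z.of_nat jn - Z.of_nat (n + jn)) (Z.of_nat (n + jn)) v lam)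
      with (G (fval fk tau) eta Lam lam (n + jn) (Z.of_nat i) (Z.of_nat jn) v).
    rewrite (main_ind (fval fk tau) Af Bf eta Lam lam HR Hx Hl (n + jn) v Hp0 (Z.of_nat i) ltac:(lia) n jn eq_refl).
    rewrite !poch_pn, Cpowz_neg. unfold CF. reflexivity.
Qed.
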